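(* Let $G_1$ and $G_2$ be locally compact groupoids with open range maps such that $G_2^{(0)}$ is Hausdorff, and let $f\colon G_1\to G_2$ be a continuous groupoid morphism. Let $Z=G_1^{(0)}\times_{f,r}G_2=\{(x,\gamma):f(x)=r(\gamma)\}$, $\rho(x,\gamma)=x$, $\sigma(x,\gamma)=s(\gamma)$, with actions $g\cdot(x,\gamma)\cdot\gamma'=(r(g),f(g)\gamma\gamma')$. Then the generalized morphism $(Z,\rho,\sigma)$ is locally proper if and only if the map $(f,r,s)\colon G_1\to G_2\times G_1^{(0)}\times G_1^{(0)}$ is proper.
   Context: A space is locally compact if every point has a compact (quasi-compact Hausdorff) neighbourhood. A continuous map is proper if it is closed with quasi-compact fibres. The generalized morphism $(Z,\rho,\sigma)$ is locally proper if the left action of $G_1$ on $Z$ is $\sigma$-proper, i.e. the map $\{(g,z)\in G_1\times Z: s(g)=\rho(z)\}\to Z\times_{G_2^{(0)}}Z=\{(z,z'):\sigma(z)=\sigma(z')\}$, $(g,z)\mapsto(gz,z)$, is proper. *)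

(* Defs.v *)
From mathcomp Require Import all_boot.
From mathcomp Require Import all_classical all_reals all_analysis.
Set Implicit Arguments. Unset Strict Implicit. Unset Printing Implicit Defensive.
Local Open Scope classical_set_scope.

Definition rel_open {T : topologicalType} (A U : set T) :=
  exists V, open V /\ U = A `&` V.
Definition rel_closed {T : topologicalType} (A C : set T) :=
  exists K, closed K /\ C = A `&` K.

Definition rel_hausdorff {T : topologicalType} (A : set T) :=
  forall a b, A a -> A b -> a <> b ->
    exists U V, [/\ open U, open V, U a, V b & A `&` U `&` V = set0].

Definition locally_compact (T : topologicalType) :=
  forall x : T, exists N : set T, [/\ nbhs x N, compact N & rel_hausdorff N].

Definition proper_on {X Y : topologicalType} (A : set X) (B : set Y) (phi : X -> Y) :=
  [/\ (forall x, A x -> B (phi x)),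
      (forall C, C `<=` A -> rel_closed A C -> rel_closed B (phi @` C)) &
      (forall y, B y -> compact (A `&` phi @^-1` [set y]))].

Record groupoid_ops (G : Type) := GroupoidOps {
  gr : G -> G; gs : G -> G; ginv : G -> G; gmul : G -> G -> G }.

Definition units {G} (o : groupoid_ops G) : set G := range (gr o).
Definition composable {G} (o : groupoid_ops G) : set (G * G) :=
  [set p | gs o p.1 = gr o p.2].

Definition is_groupoid {G : Type} (o : groupoid_ops G) :=
  let r := gr o in let s := gs o in let m := gmul o in let i := ginv o in
  [/\ (forall g, r (r g) = r g /\ s (r g) = r g),
      (forall g, r (s g) = s g /\ s (s g) = s g),
      (forall g h, s g = r h -> r (m g h) = r g /\ s (m g h) = s h),
      (forall g h k, s g = r h -> s h = r k -> m (m g h) k = m g (m h k)) &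
      (forall g, m (r g) g = g /\ m g (s g) = g) /\
      (forall g, [/\ r (i g) = s g, s (i g) = r g, m g (i g) = r g & m (i g) g = s g])].

Definition is_top_groupoid {G : topologicalType} (o : groupoid_ops G) :=
  [/\ is_groupoid o, continuous (gr o), continuous (gs o), continuous (ginv o) &
      {within composable o, continuous (fun p : G * G => gmul o p.1 p.2)}].

Definition lc_groupoid_open_range {G : topologicalType} (o : groupoid_ops G) :=
  [/\ is_top_groupoid o, locally_compact G &
      forall U : set G, open U -> rel_open (units o) (gr o @` U)].

Definition groupoid_morphism {G1 G2 : Type} (o1 : groupoid_ops G1) (o2 : groupoid_ops G2)
  (f : G1 -> G2) :=
  forall g h, gs o1 g = gr o1 h ->
    gs o2 (f g) = gr o2 (f h) /\ f (gmul o1 g h) = gmul o2 (f g) (f h).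

Definition Zspace {G1 G2 : Type} (o1 : groupoid_ops G1) (o2 : groupoid_ops G2)
  (f : G1 -> G2) : set (G1 * G2) :=
  [set z | units o1 z.1 /\ f z.1 = gr o2 z.2].
Definition Zrho {G1 G2 : Type} (z : G1 * G2) : G1 := z.1.
Definition Zsigma {G1 G2 : Type} (o2 : groupoid_ops G2) (z : G1 * G2) : G2 := gs o2 z.2.
Definition Zlact {G1 G2 : Type} (o1 : groupoid_ops G1) (o2 : groupoid_ops G2)
  (f : G1 -> G2) (g : G1) (z : G1 * G2) : G1 * G2 :=
  (gr o1 g, gmul o2 (f g) z.2).

(* (Z, rho, sigma) locally proper: the left G1-action on Z is sigma-proper *)
Definition locally_proper {G1 G2 : topologicalType} (o1 : groupoid_ops G1)
  (o2 : groupoid_ops G2) (f : G1 -> G2) :=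
  proper_on
    [set p : G1 * (G1 * G2) | Zspace o1 o2 f p.2 /\ gs o1 p.1 = Zrho p.2]
    [set q : (G1 * G2) * (G1 * G2) |
       [/\ Zspace o1 o2 f q.1, Zspace o1 o2 f q.2 & Zsigma o2 q.1 = Zsigma o2 q.2]]
    (fun p => (Zlact o1 o2 f p.1 p.2, p.2)).

(* Main.v *)
Require Import Defs.
From mathcomp Require Import all_boot.
From mathcomp Require Import all_classical all_reals all_analysis.
Set Implicit Arguments. Unset Strict Implicit. Unset Printing Implicit Defensive.
Local Open Scope classical_set_scope.

Section Alg.
Lemma unit_r G (o : groupoid_ops G) : is_groupoid o -> forall u, units o u -> gr o u = u.
Proof. by case=> H1 _ _ _ _ u [g _ <-]; exact: (H1 g).1. Qed.
Lemma unit_s G (o : groupoid_ops G) : is_groupoid o -> forall u, units o u -> gs o u = u.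
Proof. by case=> H1 _ _ _ _ u [g _ <-]; exact: (H1 g).2. Qed.
Lemma units_r G (o : groupoid_ops G) g : units o (gr o g).
Proof. by exists g. Qed.
Lemma units_s G (o : groupoid_ops G) : is_groupoid o -> forall g, units o (gs o g).
Proof. by case=> _ H2 _ _ _ g; exists (gs o g) => //; exact: (H2 g).1. Qed.
Lemma mul_gs G (o : groupoid_ops G) : is_groupoid o -> forall g, gmul o g (gs o g) = g.
Proof. by case=> _ _ _ _ [H5 _] g; exact: (H5 g).2. Qed.
Lemma mul_gr G (o : groupoid_ops G) : is_groupoid o -> forall g, gmul o (gr o g) g = g.
Proof. by case=> _ _ _ _ [H5 _] g; exact: (H5 g).1. Qed.
Lemma mulVK G (o : groupoid_ops G) : is_groupoid o -> forall a b,
  gs o a = gs o b -> gmul o (gmul o a (ginv o b)) b = a.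
Proof.
move=> Go; case: (Go) => H1 H2 H3 H4 [H5 H6] a b sab.
have [Hr Hs Hm1 Hm2] := H6 b.
rewrite (H4 a (ginv o b) b); last by rewrite Hs.
  by rewrite Hm2 -sab (mul_gs Go).
by rewrite Hr.
Qed.
Lemma mulKV G (o : groupoid_ops G) : is_groupoid o -> forall a b,
  gs o a = gr o b -> gmul o (gmul o a b) (ginv o b) = a.
Proof.
move=> Go; case: (Go) => H1 H2 H3 H4 [H5 H6] a b sab.
have [Hr Hs Hm1 Hm2] := H6 b.
rewrite (H4 a b (ginv o b) sab (esym Hr)).
by rewrite Hm1 -sab (mul_gs Go).
Qed.

Lemma f_unit G1 G2 (o1 : groupoid_ops G1) (o2 : groupoid_ops G2) f :
  is_groupoid o1 -> is_groupoid o2 -> groupoid_morphism o1 o2 f ->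
  forall u, units o1 u -> gs o2 (f u) = f u /\ gr o2 (f u) = f u.
Proof.
move=> G1o G2o fm u uu.
have ru := unit_r G1o uu; have su := unit_s G1o uu.
have [sw mw] := fm u u (etrans su (esym ru)).
have uuu : gmul o1 u u = u by rewrite -{1}ru (mul_gr G1o).
rewrite uuu in mw.
set w := f u in sw mw *.
case: (G2o) => H1 H2 H3 H4 [H5 H6].
have [Hr Hs Hm1 Hm2] := H6 w.
have e := H4 (ginv o2 w) w w Hs sw.
rewrite -mw Hm2 sw (mul_gr G2o) in e.
by rewrite sw -e.
Qed.

Lemma f_r G1 G2 (o1 : groupoid_ops G1) (o2 : groupoid_ops G2) f :
  is_groupoid o1 -> is_groupoid o2 -> groupoid_morphism o1 o2 f ->
  forall g, f (gr o1 g) = gr o2 (f g).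
Proof.
move=> G1o G2o fm g.
have [e _] := fm (gr o1 g) g (unit_s G1o (units_r o1 g)).
by rewrite -e (f_unit G1o G2o fm (units_r o1 g)).1.
Qed.

Lemma f_s G1 G2 (o1 : groupoid_ops G1) (o2 : groupoid_ops G2) f :
  is_groupoid o1 -> is_groupoid o2 -> groupoid_morphism o1 o2 f ->
  forall g, f (gs o1 g) = gs o2 (f g).
Proof.
move=> G1o G2o fm g.
have [e _] := fm g (gs o1 g) (esym (unit_r G1o (units_s G1o g))).
by rewrite e (f_unit G1o G2o fm (units_s G1o g)).2.
Qed.
End Alg.

Section Sets.
Variables (G1 G2 : Type) (o1 : groupoid_ops G1) (o2 : groupoid_ops G2) (f : G1 -> G2).
Definition Apre := [set p : G1 * (G1 * G2) | Zspace o1 o2 f p.2 /\ gs o1 p.1 = Zrho p.2].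
Definition Bset := [set q : (G1 * G2) * (G1 * G2) |
       [/\ Zspace o1 o2 f q.1, Zspace o1 o2 f q.2 & Zsigma o2 q.1 = Zsigma o2 q.2]].
Definition phi (p : G1 * (G1 * G2)) := (Zlact o1 o2 f p.1 p.2, p.2).
Definition Bp := [set t : G2 * G1 * G1 | units o1 t.1.2 /\ units o1 t.2].
Definition psi (g : G1) := (f g, gr o1 g, gs o1 g).
Definition piq (q : (G1 * G2) * (G1 * G2)) := (gmul o2 q.1.2 (ginv o2 q.2.2), q.1.1, q.2.1).
Definition sig (t : G2 * G1 * G1) := ((t.1.2, t.1.1), (t.2, f t.2)).
Definition Bpp := [set t : G2 * G1 * G1 | gr o2 t.1.1 = f t.1.2 /\ gs o2 t.1.1 = f t.2].

Hypotheses (G1o : is_groupoid o1) (G2o : is_groupoid o2) (fm : groupoid_morphism o1 o2 f).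

Lemma H3of g h : gs o2 g = gr o2 h -> gr o2 (gmul o2 g h) = gr o2 g /\ gs o2 (gmul o2 g h) = gs o2 h.
Proof. by case: G2o => _ _ H3 _ _; exact: H3. Qed.

Lemma phi_maps p : Apre p -> Bset (phi p).
Proof.
case: p => g [x c] /= [[ux fx] sg]; rewrite /Zrho /= in sg.
have e : gs o2 (f g) = gr o2 c by rewrite -(f_s G1o G2o fm) sg.
have [h1 h2] := H3of e.
split => //=; split => //=; first exact: units_r.
by rewrite (f_r G1o G2o fm) h1.
Qed.

Lemma psi_maps g : Bp (psi g).
Proof. by split => /=; [exact: units_r|exact: units_s]. Qed.

Lemma psi_Bpp g : Bpp (psi g).
Proof. by split => /=; rewrite ?(f_r G1o G2o fm) ?(f_s G1o G2o fm). Qed.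

Lemma pi_phi p : Apre p -> piq (phi p) = psi p.1.
Proof.
case: p => g [x c] /= [[ux fx] sg]; rewrite /Zrho /= in sg.
have e : gs o2 (f g) = gr o2 c by rewrite -(f_s G1o G2o fm) sg.
by rewrite /piq /phi /psi /= (mulKV G2o e) sg.
Qed.

Lemma sig_B t : Bp t -> Bpp t -> Bset (sig t).
Proof.
case: t => [[c x] y] [/= ux uy] [/= rc sc].
have [fs fr] := f_unit G1o G2o fm uy.
split; [by split|by split|by rewrite /Zsigma /= sc fs].
Qed.

Lemma psi_sig t g : Bp t -> psi g = t -> Apre (g, (t.2, f t.2)) /\ phi (g, (t.2, f t.2)) = sig t.
Proof.
case: t => [[c x] y] [/= ux uy] [ec ex ey]; subst c x y => /=.
have [fs fr] := f_unit G1o G2o fm uy.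
split; first by split => //=; split => //; rewrite fr.
by rewrite /phi /sig /Zlact /= (f_s G1o G2o fm) (mul_gs G2o).
Qed.

Lemma sig_psi t p : Apre p -> phi p = sig t -> p.2 = (t.2, f t.2) /\ psi p.1 = t.
Proof.
case: t => [[c x] y]; case: p => g [x' c'] /= [[ux fx] sg]; rewrite /Zrho /= in sg.
rewrite /phi /sig /Zlact /= => -[rg mc ey ec]; split; first by rewrite ey ec.
by rewrite /psi -mc ec -ey -sg (f_s G1o G2o fm) (mul_gs G2o) rg.
Qed.

Lemma pi_B b : Bset b -> Bp (piq b).
Proof. by case: b => [[x1 c1] [x2 c2]] [[/= u1 _] [/= u2 _] _]; split. Qed.

Lemma psi_pi b g : Bset b -> psi g = piq b -> Apre (g, b.2) /\ phi (g, b.2) = b.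
Proof.
case: b => [[x1 c1] [x2 c2]] [[/= u1 f1] [/= u2 f2] /= ss]; rewrite /Zsigma /= in ss.
rewrite /psi /piq /= => -[fg rg sg]; split; first by split.
by rewrite /phi /Zlact /= fg rg (mulVK G2o ss).
Qed.

Lemma pi_psi b p : Apre p -> phi p = b -> p.2 = b.2 /\ psi p.1 = piq b.
Proof. by move=> Ap <-; split => //; rewrite pi_phi. Qed.
End Sets.

Lemma fst_cont (X Y : topologicalType) : continuous (@fst X Y).
Proof. by case=> x y; exact: cvg_fst. Qed.
Lemma snd_cont (X Y : topologicalType) : continuous (@snd X Y).
Proof. by case=> x y; exact: cvg_snd. Qed.

Lemma cvg_within_map (T : Type) (U : topologicalType) (F : set_system T) (FF : Filter F)
  (D : set U) (x : U) (h : T -> U) :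
  h @ F --> x -> (\forall t \near F, D (h t)) -> h @ F --> within D (nbhs x).
Proof.
move=> hx hD P /= WP; rewrite /within /= in WP.
have := hx _ WP; rewrite nbhs_simpl => H.
by apply: filterS2 H hD => t H1 H2; exact: H1.
Qed.

Lemma tube (X Y : topologicalType) (K : set X) (Kc : set (X * Y)) (y0 : Y) :
  compact K -> closed Kc -> (forall x, K x -> ~ Kc (x, y0)) ->
  exists U W, [/\ open U, K `<=` U, nbhs y0 W &
    forall x y, U x -> W y -> ~ Kc (x, y)].
Proof.
move=> cK cKc HK.
pose F := filter_from (nbhs y0) (fun W => [set W' : set Y | nbhs y0 W' /\ W' `<=` W]).
have FF : Filter F.
  apply: filter_from_filter; first by exists setT; exact: filterT.
  move=> W1 W2 n1 n2; exists (W1 `&` W2); first exact: filterI.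
  by move=> W' [nW' sW']; split; split => //; move=> y /sW' [].
pose P := fun (W' : set Y) (x : X) => exists U, [/\ open U, U x &
    forall x' y, U x' -> W' y -> ~ Kc (x', y)].
have := (compact_near_coveringP K).1 cK (set Y) F P FF.
case.
- move=> x Kx.
  have : nbhs (x, y0) (~` Kc) by apply: open_nbhs_nbhs; split; [exact: closed_openC|exact: HK].
  case=> [[A1 A2]] /= [nA1 nA2] sA.
  have [U0 [[oU0 U0x] sU0]] : exists U0, open_nbhs x U0 /\ U0 `<=` A1.
    by move: nA1; rewrite nbhsE => -[U0 ? ?]; exists U0.
  exists (U0, [set W' | nbhs y0 W' /\ W' `<=` A2]).
    split; first exact: open_nbhs_nbhs.
    by exists A2.
  case=> x' W' /= [U0x' [_ sW']]; exists U0; split => // x'' y U0x'' W'y Kxy.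
  by apply: (sA (x'', y)) => //; split => /=; [exact: sU0|exact: sW'].
- move=> W nW HW.
  have KP : K `<=` P W by apply: HW; split.
  exists [set x | P W x], W; split => //.
  + rewrite openE => x [U [oU Ux HU]].
    rewrite /interior; apply: (filterS _ (open_nbhs_nbhs (conj oU Ux))).
    by move=> x' Ux'; exists U.
  + by move=> x y [U [oU Ux HU]]; exact: HU.
Qed.

Lemma p11 (X Y Z : topologicalType) : continuous (fun t : X * Y * Z => t.1.1).
Proof. by move=> t; exact: (@continuous_comp _ _ _ fst fst t (@fst_cont _ _ t) (@fst_cont _ _ t.1)). Qed.
Lemma p12 (X Y Z : topologicalType) : continuous (fun t : X * Y * Z => t.1.2).
Proof. by move=> t; exact: (@continuous_comp _ _ _ fst snd t (@fst_cont _ _ t) (@snd_cont _ _ t.1)). Qed.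
Lemma q21 (X Y Z : topologicalType) : continuous (fun t : X * (Y * Z) => t.2.1).
Proof. by move=> t; exact: (@continuous_comp _ _ _ snd fst t (@snd_cont _ _ t) (@fst_cont _ _ t.2)). Qed.
Lemma q22 (X Y Z : topologicalType) : continuous (fun t : X * (Y * Z) => t.2.2).
Proof. by move=> t; exact: (@continuous_comp _ _ _ snd snd t (@snd_cont _ _ t) (@snd_cont _ _ t.2)). Qed.

Lemma cvg_pair_pt (T : Type) (X Y : topologicalType) (F : set_system T) {FF : Filter F} (a : T -> X) (b : T -> Y) (x : X) (y : Y) :
  a @ F --> x -> b @ F --> y -> (fun z => (a z, b z)) @ F --> (x, y).
Proof. move=> ha hb; exact: (cvg_pair ha hb). Qed.

Lemma closure_eq (G2 T : topologicalType) (o2 : groupoid_ops G2) (S : set T) (a b : T -> G2) t :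
  rel_hausdorff (units o2) -> {for t, continuous a} -> {for t, continuous b} ->
  units o2 (a t) -> units o2 (b t) ->
  (forall x, S x -> a x = b x /\ units o2 (a x)) -> closure S t -> a t = b t.
Proof.
move=> H ca cb ua ub HS clt; apply: contrapT => neq.
have [U [V [oU oV Ua Vb e]]] := H _ _ ua ub neq.
have nU : nbhs t (a @^-1` U) := ca _ (open_nbhs_nbhs (conj oU Ua)).
have nV : nbhs t (b @^-1` V) := cb _ (open_nbhs_nbhs (conj oV Vb)).
have [x [Sx [Ux Vx]]] := clt _ (filterI nU nV).
have [ex ux] := HS x Sx.
have : (units o2 `&` U `&` V) (a x) by split; [split|rewrite ex].
by rewrite e.
Qed.

Lemma dir1 (G1 G2 : topologicalType) (o1 : groupoid_ops G1) (o2 : groupoid_ops G2) (f : G1 -> G2) :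
  is_top_groupoid o1 -> is_top_groupoid o2 -> rel_hausdorff (units o2) ->
  continuous f -> groupoid_morphism o1 o2 f ->
  proper_on (Apre o1 o2 f) (Bset o1 o2 f) (phi o1 o2 f) ->
  proper_on [set: G1] (Bp o1) (psi o1 f).
Proof.
move=> [G1o r1c s1c i1c m1c] [G2o r2c s2c i2c m2c] H2 fc fm [phimaps phicl phifib].
have psiBpp := psi_Bpp G1o G2o fm.
split.
- by move=> g _; exact: psi_maps.
- move=> C _ [Kc [cKc eC]].
  pose C' := Apre o1 o2 f `&` (fst @^-1` Kc).
  have cC' : closed (fst @^-1` Kc : set (G1 * (G1 * G2))).
    exact: ((continuous_closedP _).1 (@fst_cont _ _) _ cKc).
  have [K2 [cK2 eK2]] := phicl C' (@subIsetl _ _ _) (ex_intro _ _ (conj cC' erefl)).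
  exists (closure (psi o1 f @` C)); split; first exact: closed_closure.
  apply/seteqP; split.
    by move=> _ [g Cg <-]; split; [exact: psi_maps|exact: subset_closure].
  move=> t [Bt clt].
  have uf : forall u, units o1 u -> units o2 (f u).
    by move=> u uu; exists (f u) => //; exact: (f_unit G1o G2o fm uu).2.
  have tBpp : Bpp o2 f t.
    split.
      apply: (closure_eq (a := fun t : G2 * G1 * G1 => gr o2 t.1.1) (b := fun t => f t.1.2) H2 _ _ _ _ _ clt).
      - exact: (continuous_comp (@p11 _ _ _ t) (r2c _)).
      - exact: (continuous_comp (@p12 _ _ _ t) (fc _)).
      - exact: units_r.
      - exact: uf Bt.1.
      - move=> _ [g _ <-]; split; first exact: (psiBpp g).1.
        exact: units_r.
    apply: (closure_eq (a := fun t : G2 * G1 * G1 => gs o2 t.1.1) (b := fun t => f t.2) H2 _ _ _ _ _ clt).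
    - exact: (continuous_comp (@p11 _ _ _ t) (s2c _)).
    - exact: (continuous_comp (@snd_cont _ _ t) (fc _)).
    - exact: units_s.
    - exact: uf Bt.2.
    - move=> _ [g _ <-]; split; first exact: (psiBpp g).2.
      exact: units_s.
  have sB := sig_B G1o G2o fm Bt tBpp.
  have sigc : {for t, continuous (sig f)}.
    exact: (cvg_pair_pt (cvg_pair_pt (@p12 _ _ _ t) (@p11 _ _ _ t))
       (cvg_pair_pt (@snd_cont _ _ t) (continuous_comp (@snd_cont _ _ t) (fc _)))).
  have : (phi o1 o2 f @` C') (sig f t).
    rewrite eK2; split => //.
    have sub : phi o1 o2 f @` C' `<=` K2 by rewrite eK2 => ? [].
    have := closureS sub; rewrite -(closure_id K2).1 //; apply.
    move=> N nN.
    have [_ [[g Cg <-] Ng]] := clt _ (sigc _ nN).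
    exists (sig f (psi o1 f g)); split => //.
    have [Ap ep] := psi_sig G1o G2o fm (psi_maps f G1o g) (erefl (psi o1 f g)).
    exists (g, ((psi o1 f g).2, f (psi o1 f g).2)) => //.
    split => //=; rewrite eC in Cg; by case: Cg.
  case=> p [Ap Kp] ep.
  have [e2 e1] := sig_psi G1o G2o fm Ap ep.
  exists p.1 => //; rewrite eC; split => //.
- move=> t Bt.
  have [tB|tB] := pselect (Bpp o2 f t); last first.
    have -> : [set: G1] `&` psi o1 f @^-1` [set t] = set0.
      apply/seteqP; split => // g [_ /= e]; apply: tB; rewrite -e; exact: psiBpp.
    exact: compact0.
  have -> : [set: G1] `&` psi o1 f @^-1` [set t] =
      fst @` (Apre o1 o2 f `&` phi o1 o2 f @^-1` [set sig f t]).
    apply/seteqP; split.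
      move=> g [_ /= e]; have [Ap ep] := psi_sig G1o G2o fm Bt e.
      by exists (g, (t.2, f t.2)).
    move=> _ [p [Ap /= ep] <-]; have [_ e] := sig_psi G1o G2o fm Ap ep; done.
  apply: continuous_compact; first exact: continuous_subspaceT (@fst_cont _ _).
  exact: phifib (sig_B G1o G2o fm Bt tB).
Qed.

Lemma pi_cont (G1 G2 : topologicalType) (o1 : groupoid_ops G1) (o2 : groupoid_ops G2) (f : G1 -> G2) b :
  is_top_groupoid o2 -> Bset o1 o2 f b ->
  piq o2 @ within (Bset o1 o2 f) (nbhs b) --> piq o2 b.
Proof.
move=> [G2o r2c s2c i2c m2c] Bb.
have Hr : forall g, gr o2 (ginv o2 g) = gs o2 g by case: G2o => _ _ _ _ [_ H6] g; case: (H6 g).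
have cw : forall (X : topologicalType) (h : _ -> X), continuous h ->
    h @ within (Bset o1 o2 f) (nbhs b) --> h b.
  by move=> X h hc; apply: cvg_trans (hc b); apply: cvg_app; exact: cvg_within.
rewrite /piq; apply: cvg_pair_pt; last exact: (cw _ _ (@q21 _ _ _)).
apply: cvg_pair_pt; last exact: (cw _ _ (@p11 _ _ _)).
pose h := fun b' : G1 * G2 * (G1 * G2) => (b'.1.2, ginv o2 b'.2.2).
have cm := (subspace_continuousP _ _).1 m2c (h b).
have comp : composable o2 (h b).
  by case: Bb => _ _; rewrite /composable /h /Zsigma /= Hr.
have hh : h @ within (Bset o1 o2 f) (nbhs b) --> within (composable o2) (nbhs (h b)).
  apply: cvg_within_map.
    apply: (cw _ _); move=> b'; apply: cvg_pair_pt; first exact: p12.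
    exact: (continuous_comp (@q22 _ _ _ b') (i2c _)).
  rewrite near_withinE; apply: filterE => b' [_ _ e].
  by rewrite /composable /h /= Hr.
exact: (cvg_comp h _ hh (cm comp)).
Qed.

Lemma dir2 (G1 G2 : topologicalType) (o1 : groupoid_ops G1) (o2 : groupoid_ops G2) (f : G1 -> G2) :
  is_top_groupoid o1 -> is_top_groupoid o2 ->
  continuous f -> groupoid_morphism o1 o2 f ->
  proper_on [set: G1] (Bp o1) (psi o1 f) ->
  proper_on (Apre o1 o2 f) (Bset o1 o2 f) (phi o1 o2 f).
Proof.
move=> T1 T2 fc fm [psimaps psicl psifib].
have [G1o _ _ _ _] := T1; have [G2o _ _ _ _] := T2.
split.
- by move=> p Ap; exact: phi_maps.
- move=> C sCA [Kc [cKc eC]].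
  exists (closure (phi o1 o2 f @` C)); split; first exact: closed_closure.
  apply/seteqP; split.
    by move=> _ [p Cp <-]; split; [apply: (phi_maps G1o G2o fm); exact: sCA|exact: subset_closure].
  move=> b [Bb clb]; apply: contrapT => nb.
  pose K := [set: G1] `&` psi o1 f @^-1` [set piq o2 b].
  have cK : compact K := psifib _ (pi_B Bb).
  have HK : forall g, K g -> ~ Kc (g, b.2).
    move=> g [_ /= e] Kg; have [Ap ep] := psi_pi G2o Bb e; apply: nb.
    by exists (g, b.2) => //; rewrite eC; split.
  have [U [W [oU KU nW HUW]]] := tube cK cKc HK.
  have [K2 [cK2 eK2]] := psicl (~` U) (fun _ _ => I)
     (ex_intro _ (~` U) (conj (open_closedC oU) (esym (setTI _)))).
  have npb : ~ K2 (piq o2 b).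
    move=> K2pb; have : (psi o1 f @` ~` U) (piq o2 b) by rewrite eK2; split => //; exact: (pi_B Bb).
    by case=> g nUg e; apply: nUg; apply: KU; split.
  have nN1 : nbhs b [set b' | Bset o1 o2 f b' -> ~ K2 (piq o2 b')].
    exact: (pi_cont T2 Bb (open_nbhs_nbhs (conj (closed_openC cK2) npb))).
  have nN2 : nbhs b [set b' : G1 * G2 * (G1 * G2) | W b'.2] := (@snd_cont _ _ b) _ nW.
  have [_ [[p Cp <-] [N1 N2]]] := clb _ (filterI nN1 nN2).
  have Ap := sCA _ Cp.
  have := N1 (phi_maps G1o G2o fm Ap); rewrite (pi_phi G1o G2o fm Ap) => nK2.
  have Up : U p.1.
    apply: contrapT => nU; apply: nK2.
    have : (psi o1 f @` ~` U) (psi o1 f p.1) by exists p.1.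
    by rewrite eK2 => -[].
  rewrite eC in Cp; case: Cp => _ Kp.
  by apply: (HUW _ _ Up N2); rewrite -surjective_pairing.
- move=> b Bb.
  have -> : Apre o1 o2 f `&` phi o1 o2 f @^-1` [set b] =
      (fun g => (g, b.2)) @` ([set: G1] `&` psi o1 f @^-1` [set piq o2 b]).
    apply/seteqP; split.
      move=> p [Ap /= ep]; have [e2 e1] := pi_psi G1o G2o fm Ap ep.
      by exists p.1; [split|rewrite -e2; case: (p)].
    by move=> _ [g [_ /= e] <-]; have [Ap ep] := psi_pi G2o Bb e; split.
  apply: continuous_compact; last exact: psifib (pi_B Bb).
  apply: continuous_subspaceT => g.
  exact: (cvg_pair_pt (cvg_id) (cvg_cst _)).
Qed.

Theorem proposition7p4 (G1 G2 : topologicalType)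
  (o1 : groupoid_ops G1) (o2 : groupoid_ops G2) (f : G1 -> G2) :
  lc_groupoid_open_range o1 -> lc_groupoid_open_range o2 ->
  rel_hausdorff (units o2) ->
  continuous f -> groupoid_morphism o1 o2 f ->
  (locally_proper o1 o2 f <->
   proper_on [set: G1] [set t : G2 * G1 * G1 | units o1 t.1.2 /\ units o1 t.2]
     (fun g => (f g, gr o1 g, gs o1 g))).
Proof.
move=> [T1 _ _] [T2 _ _] H2 fc fm; split.
- exact: (dir1 T1 T2 H2 fc fm).
- exact: (dir2 T1 T2 fc fm).
Qed.
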